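(* Let $1 \le a \le b$ be integers and let $G$ be a graph. If $G$ has an $[a,b]$-labelling, then $G$ has an $[a,b]$-labelling in which every edge label is at most $2a$.
   Context: For a graph $G$ and integers $1 \le a \le b$, an $[a,b]$-labelling of $G$ is an assignment of a nonnegative integer label to each edge of $G$ such that (i) for every vertex $v$, the sum of the labels of the edges incident to $v$ is even and lies in $[2a,2b]$, and (ii) the subgraph consisting of all vertices of $G$ and the edges with nonzero label is connected. (A graph has an $[a,b]$-labelling iff it has a closed walk visiting every vertex at least $a$ and at most $b$ times, the label of an edge being the number of traversals.) *)

(* Defs.v *)
From mathcomp Require Import all_boot.
Set Implicit Arguments. Unset Strict Implicit. Unset Printing Implicit Defensive.

Definition simple_graph (T : finType) (g : rel T) : Prop :=
  symmetric g /\ irreflexive g.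

(* An edge labelling of g with nonnegative integers is represented as a
   symmetric function lab : T -> T -> nat which vanishes on non-edges;
   lab x y is the label of the edge xy. *)
Definition edge_labelling (T : finType) (g : rel T) (lab : T -> T -> nat) : Prop :=
  (forall x y, lab x y = lab y x) /\ (forall x y, ~~ g x y -> lab x y = 0).

Definition lab_deg (T : finType) (lab : T -> T -> nat) (v : T) : nat :=
  \sum_(u : T) lab v u.

Definition ab_labelling (T : finType) (g : rel T) (a b : nat)
    (lab : T -> T -> nat) : Prop :=
  edge_labelling g lab /\
  (forall v, ~~ odd (lab_deg lab v) /\ 2 * a <= lab_deg lab v <= 2 * b) /\
  (forall x y, connect (fun u w => 0 < lab u w) x y).

(* Main.v *)
Require Import Defs.
From mathcomp Require Import all_boot.
From mathcomp Require Import zify.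

Definition cap (a l : nat) := if 2 * a < l then 2 * a - odd l else l.

Lemma cap_odd a l : 0 < a -> odd (cap a l) = odd l.
Proof.
move=> a0; rewrite /cap; case: ifP => // H.
case: (boolP (odd l)) => Ho /=.
  by rewrite oddB ?oddM /= ?Ho //; lia.
by rewrite subn0 oddM /=; apply/esym/negbTE.
Qed.

Lemma odd_sum_eq (T : finType) (F G : T -> nat) :
  (forall i, odd (F i) = odd (G i)) ->
  odd (\sum_(i : T) F i) = odd (\sum_(i : T) G i).
Proof.
move=> H; apply: (big_ind2 (fun x y => odd x = odd y)) => //.
by move=> x1 x2 y1 y2 E1 E2; rewrite !oddD E1 E2.
Qed.

Theorem lemma3p1 (T : finType) (g : rel T) (a b : nat) :
  simple_graph g -> 1 <= a -> a <= b ->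
  (exists lab, ab_labelling g a b lab) ->
  exists lab, ab_labelling g a b lab /\ (forall x y, lab x y <= 2 * a).
Proof.
move=> [gs gi] a1 ab [lab [[lsym lng] [ldeg lcon]]].
exists (fun x y => cap a (lab x y)).
have capP : forall l, cap a l <= l by move=> l; rewrite /cap; case: ifP; lia.
have capPos : forall l, (0 < cap a l) = (0 < l).
  by move=> l; rewrite /cap; case: ifP => H //; case: (odd l) => /=; lia.
split; last by move=> x y; rewrite /cap; case: ifP => H; lia.
split.
  split; first by move=> x y; rewrite lsym.
  by move=> x y /lng ->.
split.
  move=> v; have [Hod /andP [Hlo Hhi]] := ldeg v.
  have Hodd : ~~ odd (lab_deg (fun x y => cap a (lab x y)) v).
    by rewrite /lab_deg (@odd_sum_eq _ _ (lab v)) // => i; rewrite cap_odd.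
  split => //.
  have Hle : lab_deg (fun x y => cap a (lab x y)) v <= lab_deg lab v.
    by rewrite /lab_deg; apply: leq_sum => i _; apply: capP.
  apply/andP; split; last by apply: leq_trans Hle Hhi.
  case: (pickP (fun u => 2 * a < lab v u)) => [u Hu | Hn].
    have H1 : cap a (lab v u) <= lab_deg (fun x y => cap a (lab x y)) v.
      by rewrite /lab_deg (bigD1 u) //= leq_addr.
    move: H1 Hodd; rewrite /cap Hu.
    set D := lab_deg _ v.
    case: (odd (lab v u)) => /= H1 Hodd.
      have : 2 * a != D.+1 by apply/eqP => E; move: (congr1 odd E) Hodd => /=; rewrite oddM /=; by case: (odd D).
      lia.
    lia.
  suff -> : lab_deg (fun x y => cap a (lab x y)) v = lab_deg lab v by [].
  rewrite /lab_deg; apply: eq_bigr => i _; rewrite /cap.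
  by have := Hn i; rewrite /= => ->.
move=> x y; rewrite (@eq_connect _ _ (fun u w => 0 < lab u w)) //.
Qed.
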